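(* Let $1\le k\le m$, let $l=(l_1,\dots,l_k)$ be integers with $0<l_1<\dots<l_k<m+1$, and let $\nu$ be a permutation of $[k]$. Let $f:[m]\to\mathbb{R}$ be such that the average $\frac{1}{m-l_i+1}\sum_{v=l_i}^{m}f(v)$ is the same for all $i\in[k]$, and define $g:S'_{k,m}\to\mathbb{R}$ by $g(x)=\sum_{i=1}^{k}f(x_i)$. Then $g$ is homomesic for $\underline{W}_\nu$ acting on $S'_{k,m}$.
   Context: $S_{k,m}$: integer $k$-tuples with $0<x_1<\dots<x_k<m+1$. Winching $W_i(x)=y$: $y_j=x_j$ ($j\ne i$), $y_i=x_i+1$ if $x_i+1<x_{i+1}$, else $y_i=x_{i-1}+1$, with $x_0=0$, $x_{k+1}=m+1$. Given lower bounds $l$, $S'_{k,m}=\{x\in S_{k,m}: x_i\ge l_i\ \forall i\}$; winching with lower bounds $\underline{W}_i$ agrees with $W_i$ except that its $i$-th coordinate is $\max\{(W_i(x))_i,\,l_i\}$ (it is a permutation of $S'_{k,m}$). $\underline{W}_\nu=\underline{W}_{\nu(k)}\circ\cdots\circ\underline{W}_{\nu(1)}$. A function on a finite set with a permutation $\tau$ is homomesic if its average over every $\tau$-orbit is the same constant. *)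

(* Defs.v *)
From HB Require Import structures.
From mathcomp Require Import all_boot all_order all_algebra all_fingroup.
Set Implicit Arguments. Unset Strict Implicit. Unset Printing Implicit Defensive.
Import Order.TTheory GRing.Theory Num.Theory.

(* Conventions: indices are 0-based, i : 'I_k stands for the paper's i+1.
   A k-tuple x = (x_1,...,x_k) is stored as  x : k.-tuple 'I_(m.+1)
   (coordinates are naturals <= m; entry j of the tuple is x_{j+1}). *)

Section Winching.
Variables (k m : nat).

Definition tup := (k.-tuple 'I_(m.+1))%type.

Definition xv (x : tup) (j : nat) : nat := nth 0 (map val x) j.

Definition Sprime (l : seq nat) : {set tup} :=
  [set x : tup | [&& 0 < xv x 0,
                     [forall j : 'I_k, (j.+1 < k) ==> (xv x j < xv x j.+1)],
                     xv x k.-1 < m.+1 &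
                     [forall j : 'I_k, nth 0 l j <= xv x j]]].

(* neighbours with the conventions x_0 = 0, x_{k+1} = m+1 *)
Definition xprev (x : tup) (i : 'I_k) : nat := if val i == 0 then 0 else xv x i.-1.
Definition xnext (x : tup) (i : 'I_k) : nat := if i.+1 == k then m.+1 else xv x i.+1.

Definition winch_coord (x : tup) (i : 'I_k) : nat :=
  if (xv x i).+1 < xnext x i then (xv x i).+1 else (xprev x i).+1.

Definition lwinch (l : seq nat) (i : 'I_k) (x : tup) : tup :=
  [tuple (if j == i then inord (maxn (winch_coord x i) (nth 0 l i)) else tnth x j) | j < k].

(* W_nu = W_{nu(k)} o ... o W_{nu(1)} : W_{nu(1)} is applied first *)
Definition lwinch_perm (l : seq nat) (nu : 'S_k) (x : tup) : tup :=
  foldl (fun y j => lwinch l (nu j) y) x (enum 'I_k).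

End Winching.

Definition homomesic (R : realFieldType) (T : finType) (S : {set T}) (tau : T -> T)
  (g : T -> R) : Prop :=
  exists c : R, forall x, x \in S ->
    ((\sum_(y <- fingraph.orbit tau x) g y) / (size (fingraph.orbit tau x))%:R = c)%R.

(* Main.v *)
Require Import Defs.
From HB Require Import structures.
From mathcomp Require Import all_boot all_order all_algebra all_fingroup.
From mathcomp Require Import zify ring.
Import Order.TTheory GRing.Theory Num.Theory.

Set Implicit Arguments. Unset Strict Implicit. Unset Printing Implicit Defensive.

Section Basic.
Variables (k m : nat) (l : seq nat).
Local Notation T := (tup k m).
Local Notation S := (@Sprime k m l).

Lemma xv_default (x : T) j : k <= j -> xv x j = 0.
Proof. by move=> h; rewrite /xv nth_default // size_map size_tuple. Qed.

Lemma xv_tnth (x : T) (i : 'I_k) : xv x i = val (tnth x i).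
Proof. by rewrite /xv (nth_map ord0) ?size_tuple // -tnth_nth. Qed.

Lemma xv_le (x : T) j : xv x j <= m.
Proof.
case: (ltnP j k) => h; last by rewrite xv_default.
by rewrite (xv_tnth x (Ordinal h)) -ltnS ltn_ord.
Qed.

Lemma xv_lwinch (i : 'I_k) (x : T) j :
  xv (lwinch l i x) j =
  if j == i then val (inord (maxn (winch_coord x i) (nth 0 l i)) : 'I_m.+1)
  else xv x j.
Proof.
case: (ltnP j k) => hj.
  rewrite (xv_tnth _ (Ordinal hj)) tnth_mktuple /=.
  have -> : (Ordinal hj == i) = (j == i :> nat) by [].
  by case: (j == i :> nat) => //; rewrite (xv_tnth x (Ordinal hj)).
have ne : (j == i :> nat) = false.
  by apply/negbTE; rewrite neq_ltn (leq_trans (ltn_ord i) hj) orbT.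
by rewrite ne !xv_default.
Qed.

Lemma tup_eq (x y : T) : (forall j, j < k -> xv x j = xv y j) -> x = y.
Proof.
move=> h; apply: eq_from_tnth => i; apply: val_inj.
by rewrite -!xv_tnth h.
Qed.


Lemma inSP (x : T) : x \in S ->
  [/\ 0 < xv x 0, forall j, j.+1 < k -> xv x j < xv x j.+1 &
     forall j, j < k -> nth 0 l j <= xv x j].
Proof.
rewrite inE => /and4P[h0 /forallP h1 _ /forallP h2]; split => //.
  move=> j hj; have hj' : j < k by apply: ltnW.
  by move: (h1 (Ordinal hj')); rewrite /= hj.
by move=> j hj; exact: (h2 (Ordinal hj)).
Qed.

Lemma inSI (x : T) : 0 < xv x 0 -> (forall j, j.+1 < k -> xv x j < xv x j.+1) ->
  (forall j, j < k -> nth 0 l j <= xv x j) -> x \in S.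
Proof.
move=> h0 h1 h2; rewrite inE h0 /=; apply/and3P; split.
- by apply/forallP => j; apply/implyP => hj; exact: h1.
- by rewrite ltnS xv_le.
- by apply/forallP => j; exact: h2.
Qed.

Lemma prev_lt (x : T) (i : 'I_k) : x \in S -> xprev x i < xv x i.
Proof.
move=> /inSP[h0 h1 _]; rewrite /xprev; case: eqP => [->|ne] //.
have e : i = (i.-1).+1 :> nat by rewrite prednK // lt0n; apply/eqP.
by rewrite [in X in _ < X]e; apply: h1; rewrite -e.
Qed.

Lemma lt_next (x : T) (i : 'I_k) : x \in S -> xv x i < xnext x i.
Proof.
move=> /inSP[h0 h1 _]; rewrite /xnext; case: eqP => [_|ne].
  by rewrite ltnS xv_le.
apply: h1; have := ltn_ord i; rewrite leq_eqVlt => /orP[/eqP|] //.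
Qed.

Lemma next_le (x : T) (i : 'I_k) : xnext x i <= m.+1.
Proof. by rewrite /xnext; case: eqP => // _; apply: leq_trans (xv_le _ _) _. Qed.

Lemma lb_le (x : T) (i : 'I_k) : x \in S -> nth 0 l i <= xv x i.
Proof. by move=> /inSP[_ _ h]; apply: h. Qed.

Definition wval (x : T) (i : 'I_k) := maxn (winch_coord x i) (nth 0 l i).

Lemma wval_bounds (x : T) (i : 'I_k) : x \in S ->
  [/\ xprev x i < wval x i, wval x i < xnext x i, nth 0 l i <= wval x i & wval x i <= m].
Proof.
move=> xS; have h1 := prev_lt i xS; have h2 := lt_next i xS; have h3 := lb_le i xS.
have h4 := next_le x i.
rewrite /wval /winch_coord; case: ifP => hc; split; lia.
Qed.

Lemma xv_lwinchS (x : T) (i : 'I_k) j : x \in S ->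
  xv (lwinch l i x) j = if j == i then wval x i else xv x j.
Proof.
move=> xS; rewrite xv_lwinch; case: ifP => // _.
by rewrite /= inordK // ltnS; case: (wval_bounds i xS).
Qed.

Lemma lwinchS (x : T) (i : 'I_k) : x \in S -> lwinch l i x \in S.
Proof.
move=> xS; have [b1 b2 b3 b4] := wval_bounds i xS.
have [h0 h1 h2] := inSP xS.
apply: inSI.
- rewrite xv_lwinchS //; case: eqP => // e; lia.
- move=> j hj; rewrite !xv_lwinchS //.
  case: (eqVneq j i) => [ej|nj].
    have -> : (j.+1 == i) = false by rewrite ej; apply/negbTE; rewrite gtn_eqF.
    move: b2; rewrite /xnext ej; case: eqP => // ek; move: hj; rewrite ej ek ltnn //.
  case: (eqVneq (j.+1) (val i)) => [ej|nj1]; last exact: h1.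
  have e2 : nat_of_ord i = j.+1 by rewrite ej.
  by move: b1; rewrite /xprev -ej /= e2.
- move=> j hj; rewrite xv_lwinchS //; case: (eqVneq j i) => [e|_]; last exact: h2.
  have e2 : j = nat_of_ord i by rewrite e.
  by rewrite e2.
Qed.

Lemma lwinch_inj (i : 'I_k) (x y : T) : x \in S -> y \in S ->
  lwinch l i x = lwinch l i y -> x = y.
Proof.
move=> xS yS e.
have ej : forall j : nat, j != i -> xv x j = xv y j.
  move=> j nj; have := congr1 (fun z => xv z j) e => /=.
  by rewrite !xv_lwinchS // (negbTE nj).
have ep : xprev x i = xprev y i.
  rewrite /xprev; case: eqP => // ne; apply: ej.
  have hi : 0 < nat_of_ord i by rewrite lt0n; apply/eqP.
  lia.
have en : xnext x i = xnext y i.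
  by rewrite /xnext; case: eqP => // _; apply: ej; rewrite neq_ltn ltnSn orbT.
have ew : wval x i = wval y i.
  by have := congr1 (fun z => xv z i) e => /=; rewrite !xv_lwinchS // eqxx.
apply: tup_eq => j hj; case: (eqVneq j i) => [->|nj]; last exact: ej.
have h1 := prev_lt i xS; have h2 := lt_next i xS; have h3 := lb_le i xS.
have g1 := prev_lt i yS; have g2 := lt_next i yS; have g3 := lb_le i yS.
move: ew; rewrite /wval /winch_coord ep en.
rewrite ep en in h1 h2.
case: ifP => c1; case: ifP => c2; lia.
Qed.

End Basic.

Definition ccf (s a b : nat) : bool := if (a < s) == (b < s) then a < b else b < s.

Lemma ccf1 s a b : a = s -> b != s -> ccf s a b.
Proof.
rewrite /ccf => -> /negbTE nb; rewrite ltnn; case: (ltnP b s) => hb //=.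
by rewrite ltn_neqAle eq_sym nb.
Qed.
Lemma ccf2 s a b : a = s -> b != s -> ccf s.+1 a b = false.
Proof.
rewrite /ccf => -> /negbTE nb; rewrite ltnSn; case: (ltnP b s.+1) => hb //=.
Qed.
Lemma ccf3 s a b : b = s -> a != s -> ccf s a b = false.
Proof.
rewrite /ccf => -> /negbTE na; rewrite ltnn; case: (ltnP a s) => ha //=.
Qed.
Lemma ccf4 s a b : b = s -> a != s -> ccf s.+1 a b.
Proof.
rewrite /ccf => -> /negbTE na; rewrite ltnSn; case: (ltnP a s.+1) => ha //=.
by move: ha; rewrite ltnS leq_eqVlt na.
Qed.
Lemma ccf5 s a b : a != s -> b != s -> ccf s.+1 a b = ccf s a b.
Proof.
move=> /negbTE na /negbTE nb; rewrite /ccf !ltnS.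
by rewrite [a <= s]leq_eqVlt [b <= s]leq_eqVlt na nb.
Qed.
Lemma ccf6 n a b : a < n -> b < n -> ccf n a b = ccf 0 a b.
Proof. by move=> ha hb; rewrite /ccf ha hb. Qed.

Section Perm.
Variables (k : nat) (nu : 'S_k).

Definition pos (i : nat) : nat := index i (map (fun t : 'I_k => val (nu t)) (enum 'I_k)).

Lemma pos_nu (t : 'I_k) : pos (nu t) = t.
Proof.
rewrite /pos (index_map (f := fun t : 'I_k => val (nu t))) ?index_enum_ord //.
by move=> a b /val_inj/perm_inj.
Qed.

Lemma pos_lt (a : nat) : a < k -> exists u : 'I_k, a = nu u.
Proof.
move=> ha; exists ((nu^-1)%g (Ordinal ha)); by rewrite permKV.
Qed.

Lemma pos_ge (a : nat) : k <= a -> pos a = k.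
Proof.
move=> ha; rewrite /pos memNindex ?size_map ?size_enum_ord //.
  by rewrite -enumT size_enum_ord.
apply/negP => /mapP[t _ e]; move: (ltn_ord (nu t)); rewrite -e; lia.
Qed.

Lemma pos_neq (a : nat) (t : 'I_k) : a != nu t -> pos a != t.
Proof.
case: (ltnP a k) => ha.
  have [u ->] := pos_lt ha; rewrite pos_nu => ne; apply: contra ne => /eqP e.
  by apply/eqP; congr (val (nu _)); apply: val_inj.
by move=> _; rewrite pos_ge //; move: (ltn_ord t); lia.
Qed.

Lemma pos_ltk (a : nat) : a < k -> pos a < k.
Proof. by move=> ha; have [u ->] := pos_lt ha; rewrite pos_nu. Qed.

End Perm.



Local Open Scope ring_scope.

Lemma sum_if_eq (R : nmodType) (n a : nat) (x : R) :
  \sum_(i < n) (if (i : nat) == a then x else 0%R) = if (a < n)%N then x else 0%R.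
Proof.
elim: n => [|n IH]; first by rewrite big_ord0.
rewrite big_ord_recr /= IH.
case: (ltngtP a n) => h.
- by rewrite addr0 ltnS (ltnW h).
- by rewrite addr0 ltnS leqNgt h.
- by rewrite add0r h ltnSn.
Qed.



Section Pot.
Variables (R : realFieldType) (k m : nat) (l : seq nat) (nu : 'S_k) (f : nat -> R) (c : R).
Local Notation T := (tup k m).
Local Notation S := (@Sprime k m l).

Definition hh (u : nat) : R := f u - c.
Definition PP (a : nat) : R := - \sum_(a <= u < m.+1) hh u.

Lemma PP_end : PP m.+1 = 0.
Proof. by rewrite /PP big_geq // oppr0. Qed.

Lemma hhE (a : nat) : (a <= m)%N -> hh a = PP a.+1 - PP a.
Proof. move=> ha; rewrite /PP (big_ltn (m := a)) ?ltnS //; ring. Qed.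


Variable (hl0 : (0 < nth 0%N l 0)%N).
Variable (Pl : forall i, (i < k)%N -> PP (nth 0%N l i) = 0).

Definition adjb (z : T) (i : nat) := (xv z i).+1 == xv z i.+1.
Definition Tm (s : nat) (z : T) (i : nat) : R :=
  if ccf s (pos nu i) (pos nu i.+1) && adjb z i then PP (xv z i.+1) else 0.
Definition Phi (s : nat) (z : T) : R :=
  \sum_(i < k) PP (xv z i) - \sum_(i < k.-1) Tm s z i.

Lemma step (t : 'I_k) (z : T) : z \in S ->
  Phi t.+1 (lwinch l (nu t) z) - Phi t z = hh (xv z (nu t)).
Proof.
move=> zS.
set j := nu t; set z' := lwinch l j z; set w := wval l z j.
have hp : pos nu j = t by rewrite /j pos_nu.
have hpn : forall a : nat, a != j -> pos nu a != t by move=> a; exact: pos_neq.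
have xz' : forall a : nat, xv z' a = if a == j then w else xv z a.
  by move=> a; rewrite /z' xv_lwinchS.
have S1 : \sum_(i < k) PP (xv z' i) = \sum_(i < k) PP (xv z i) + (PP w - PP (xv z j)).
  rewrite (bigD1 j) //= [in RHS](bigD1 j) //= xz' eqxx.
  rewrite (eq_bigr (fun i : 'I_k => PP (xv z i))); first by ring.
  by move=> i ni; rewrite xz'; have -> : ((i:nat) == j) = false by apply/negbTE.
set A := if (xv z j.-1).+1 == w then PP w else 0.
set B := if adjb z j then PP (xv z j.+1) else 0.
have pt : forall i : 'I_k.-1, Tm t.+1 z' i =
    Tm t z i + (if (i : nat) == j.-1 then (if (0 < j)%N then A else 0) else 0)
             - (if (i : nat) == j then B else 0).
  move=> i; have hi : (i.+1 < k)%N by move: (ltn_ord i); lia.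
  case: (eqVneq (i : nat) j) => [eij|nij].
    have n1 : (i.+1 != j)%N by rewrite eij; lia.
    rewrite /Tm.
    have n2 : (j.+1 != j)%N by lia.
    rewrite eij (ccf2 hp (hpn _ n2)) (ccf1 hp (hpn _ n2)) /=.
    have -> : (if (j:nat) == j.-1 then (if (0 < j)%N then A else 0) else 0) = 0.
      by case: (eqVneq (j:nat) j.-1) => // e; have -> : (0 < j)%N = false by lia.
    by rewrite addr0 subrr.
  have e0 : ((i : nat) == j) = false by apply/negbTE.
  rewrite ?e0 /= subr0.
  case: (eqVneq i.+1 j) => [eij1|nij1].
    have hj0 : (0 < j)%N by rewrite -eij1.
    have -> : (i : nat) = j.-1 by rewrite -eij1.
    rewrite eqxx hj0 /Tm.
    rewrite (ccf3 (s := t) (a := pos nu j.-1) (b := pos nu j.-1.+1)); last first.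
      by apply: hpn; lia.
      by rewrite prednK.
    rewrite (ccf4 (s := t) (a := pos nu j.-1) (b := pos nu j.-1.+1)); last first.
      by apply: hpn; lia.
      by rewrite prednK.
    rewrite /= add0r /A /adjb (prednK hj0) !xz' eqxx.
    by have -> : (j.-1 == j) = false by lia.
  have e1 : (i.+1 == j) = false by apply/negbTE.
  have -> : (if (i:nat) == j.-1 then (if (0 < j)%N then A else 0) else 0) = 0.
    case: (eqVneq (i:nat) j.-1) => // e.
    by have -> : (0 < j)%N = false by move: nij1; rewrite e; lia.
  rewrite addr0 /Tm ccf5 ?hpn // /adjb !xz' e0 e1.

  by [].
have S2 : \sum_(i < k.-1) Tm t.+1 z' i = \sum_(i < k.-1) Tm t z i
     + (if (0 < j)%N then A else 0) - (if (j.+1 < k)%N then B else 0).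
  rewrite (eq_bigr _ (fun i _ => pt i)) sumrB big_split /= !sum_if_eq.
  have -> : (j < k.-1)%N = (j.+1 < k)%N by move: (ltn_ord j); lia.
  case: (posnP j) => [hj0|hj0]; first by rewrite hj0 /=; case: ifP.
  by have -> : (j.-1 < k.-1)%N by move: (ltn_ord j); lia.
have hjm : (xv z j <= m)%N by apply: xv_le.
have key : PP w - (if (0 < j)%N then A else 0) + (if (j.+1 < k)%N then B else 0) = PP (xv z j).+1.
  have h1 := prev_lt j zS; have h2 := lt_next j zS; have h3 := lb_le j zS.
  have hjk := ltn_ord j.
  have xp1 : (0 < j)%N -> xprev z j = xv z j.-1.
    by rewrite /xprev => hj0; have -> : (val j == 0) = false by simpl; lia.
  have xp0 : j = 0%N :> nat -> xprev z j = 0%N.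
    by rewrite /xprev => hj0; have -> : (val j == 0) = true by simpl; lia.
  have xn1 : (j.+1 < k)%N -> xnext z j = xv z j.+1.
    by rewrite /xnext => hj0; have -> : (j.+1 == k) = false by lia.
  have xn0 : (j.+1 < k)%N = false -> xnext z j = m.+1.
    by rewrite /xnext => hj0; have -> : (j.+1 == k) = true by lia.
  rewrite /A /B /adjb.
  case: (ltnP (xv z j).+1 (xnext z j)) => hc.
    have hw : w = (xv z j).+1.
      by rewrite /w /wval /winch_coord hc; apply/maxn_idPl; lia.
    rewrite hw.
    have -> : (if (0 < j)%N then (if (xv z j.-1).+1 == (xv z j).+1 then PP (xv z j).+1 else 0) else 0) = 0.
      case: (posnP j) => // hj0; rewrite -(xp1 hj0).
      by have -> : ((xprev z j).+1 == (xv z j).+1) = false by lia.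
    have -> : (if (j.+1 < k)%N then (if (xv z j).+1 == xv z j.+1 then PP (xv z j.+1) else 0) else 0) = 0.
      case: ifP => // hj1; rewrite -(xn1 hj1).
      by have -> : ((xv z j).+1 == xnext z j) = false by lia.
    by rewrite subr0 addr0.
  have hw : w = maxn (xprev z j).+1 (nth 0%N l j).
    by rewrite /w /wval /winch_coord; have -> : ((xv z j).+1 < xnext z j)%N = false by lia.
  have -> : (if (j.+1 < k)%N then (if (xv z j).+1 == xv z j.+1 then PP (xv z j.+1) else 0) else 0) = PP (xv z j).+1.
    case: ifP => hj1.
      have e : xnext z j = (xv z j).+1 by lia.
      by rewrite -(xn1 hj1) e eqxx.
    move: hc; rewrite xn0 // => hc.
    have -> : (xv z j).+1 = m.+1 by lia.
    by rewrite PP_end.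
  suff -> : PP w - (if (0 < j)%N then (if (xv z j.-1).+1 == w then PP w else 0) else 0) = 0 by rewrite add0r.
  case: (posnP j) => [hj0|hj0].
    rewrite subr0 hw xp0 //.
    have -> : maxn 1 (nth 0%N l j) = nth 0%N l 0 by rewrite hj0; apply/maxn_idPr.
    by apply: Pl; lia.
  rewrite hw xp1 //.
  case: (leqP (nth 0%N l j) (xv z j.-1).+1) => hl.
    by rewrite eqxx subrr.
  rewrite Pl //.
  by case: eqP => _; rewrite subrr.
rewrite /Phi S1 S2 (hhE hjm) -key; ring.
Qed.

Definition Zs (x : T) (s : nat) : T :=
  foldl (fun y t => lwinch l (nu t) y) x (take s (enum 'I_k)).

Lemma foldl_inS (r : seq 'I_k) (x : T) : x \in S ->
  foldl (fun y t => lwinch l (nu t) y) x r \in S.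
Proof. by elim: r x => [|a r IH] x xS //=; apply: IH; apply: lwinchS. Qed.

Lemma ZsS (x : T) (u : 'I_k) : Zs x u.+1 = lwinch l (nu u) (Zs x u).
Proof.
rewrite /Zs (take_nth u) ?size_enum_ord // foldl_rcons.
by congr (lwinch l (nu _) _); apply: val_inj; rewrite /= nth_enum_ord.
Qed.

Lemma Zs_fix (x : T) (t : 'I_k) (s : nat) : x \in S -> (s <= t)%N ->
  xv (Zs x s) (nu t) = xv x (nu t).
Proof.
move=> xS; elim: s => [|s IH] hs; first by rewrite /Zs take0.
have hsk : (s < k)%N by apply: leq_trans hs (ltnW (ltn_ord t)).
rewrite (ZsS x (Ordinal hsk)) xv_lwinchS ?foldl_inS //.
case: eqP => [e|_]; last by apply: IH; apply: ltnW.
have : t = Ordinal hsk by apply: (@perm_inj _ nu); apply: val_inj; exact: e.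
by move=> et; move: hs; rewrite et /= ltnn.
Qed.

Lemma chain (x : T) (s : nat) : x \in S -> (s <= k)%N ->
  Phi s (Zs x s) - Phi 0 x = \sum_(t < k | (t < s)%N) hh (xv x (nu t)).
Proof.
move=> xS; elim: s => [|s IH] hs.
  by rewrite /Zs take0 /= subrr big_pred0.
have hsk : (s < k)%N by [].
set u := Ordinal hsk.
have := step u (foldl_inS (take s (enum 'I_k)) xS).
rewrite -/(Zs x s) -(ZsS x u) Zs_fix //= => e.
rewrite (bigD1 u) ?ltnSn //=.
rewrite (eq_bigl (fun t : 'I_k => (t < s)%N)); last first.
  move=> t /=; rewrite (_ : (t != u) = ((t:nat) != s)) // ltnS.
  by rewrite ltn_neqAle andbC.
by rewrite -(IH (ltnW hs)) -e addrA subrK.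
Qed.

Lemma Phi_k (z : T) : Phi k z = Phi 0 z.
Proof.
rewrite /Phi; congr (_ - _); apply: eq_bigr => i _; rewrite /Tm ccf6 //.
  by apply: pos_ltk; move: (ltn_ord i); lia.
by apply: pos_ltk; move: (ltn_ord i); lia.
Qed.

Lemma phi_tel (x : T) : x \in S ->
  Phi 0 (lwinch_perm l nu x) - Phi 0 x = \sum_(i < k) hh (xv x i).
Proof.
move=> xS; have := chain xS (leqnn k).
rewrite Phi_k /Zs take_oversize ?size_enum_ord // => ->.
rewrite [RHS](reindex_inj (@perm_inj _ nu)) /=.
by apply: eq_bigl => t; rewrite ltn_ord.
Qed.

End Pot.
Local Close Scope ring_scope.

Unset Implicit Arguments.
Set Strict Implicit.

Lemma foldl_inj (k m : nat) (l : seq nat) (nu : 'S_k) (r : seq 'I_k) (x y : tup k m) :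
  x \in Sprime k m l -> y \in Sprime k m l ->
  foldl (fun z t => lwinch l (nu t) z) x r = foldl (fun z t => lwinch l (nu t) z) y r -> x = y.
Proof.
elim: r x y => [|a r IH] x y xS yS /= e; first by [].
have h1 := lwinchS (nu a) xS; have h2 := lwinchS (nu a) yS.
exact: (lwinch_inj xS yS (IH _ _ h1 h2 e)).
Qed.

Lemma l_mono (k : nat) (l : seq nat) :
  (forall j : nat, j.+1 < k -> nth 0%N l j < nth 0%N l j.+1) ->
  forall i j, i <= j -> j < k -> nth 0%N l i <= nth 0%N l j.
Proof.
move=> h i j; elim: j => [|j IH] hij hj; first by move: hij; rewrite leqn0 => /eqP ->.
move: hij; rewrite leq_eqVlt => /orP[/eqP -> //|]; rewrite ltnS => hij.
by apply: leq_trans (IH hij (ltnW hj)) (ltnW (h j hj)).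
Qed.

Theorem mainTheorem7 (R : realFieldType) (k m : nat) (l : seq nat) (nu : 'S_k)
  (f : nat -> R)
  (hk1 : 1 <= k) (hkm : k <= m)
  (hl_size : size l = k)
  (hl0 : 0 < nth 0 l 0)
  (hl_incr : forall j : nat, j.+1 < k -> nth 0%N l j < nth 0%N l j.+1)
  (hl_last : nth 0 l k.-1 < m.+1)
  (hf : forall i j : 'I_k,
     ((\sum_(nth 0%N l i <= v < m.+1) f v) / (m - nth 0%N l i + 1)%:R
      = (\sum_(nth 0%N l j <= v < m.+1) f v) / (m - nth 0%N l j + 1)%:R)%R) :
  homomesic (@Sprime k m l) (@lwinch_perm k m l nu)
    (fun x : tup k m => (\sum_(i < k) f (val (tnth x i)))%R).
Proof.
set c0 := ((\sum_(nth 0%N l 0 <= v < m.+1) f v) / (m - nth 0%N l 0 + 1)%:R)%R.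
have lm : forall i, i < k -> nth 0%N l i <= m.
  move=> i hi; rewrite -ltnS; apply: leq_ltn_trans hl_last.
  apply: (l_mono _ _ hl_incr); lia.
have Pl : forall i, i < k -> PP m f c0 (nth 0%N l i) = 0%R.
  move=> i hi.
  have h := hf (Ordinal hi) (Ordinal hk1); rewrite /= in h.
  rewrite /PP /hh sumrB sumr_const_nat.
  have hd : ((m - nth 0%N l i + 1)%:R != 0 :> R)%R by rewrite pnatr_eq0 addn1.
  have e : (\sum_(nth 0%N l i <= v < m.+1) f v = c0 * (m - nth 0%N l i + 1)%:R)%R.
    by rewrite /c0 -h divfK.
  rewrite e (_ : (m.+1 - nth 0%N l i) = (m - nth 0%N l i + 1))%N; last by have := lm i hi; lia.
  by rewrite mulr_natr subrr oppr0.
pose tau := @lwinch_perm k m l nu.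
pose Ph := @Phi R k m nu f c0 0.
have tauS : forall x, x \in Sprime k m l -> tau x \in Sprime k m l.
  by move=> x xS; rewrite /tau /lwinch_perm; apply: foldl_inS.
have tauinj : {in Sprime k m l &, injective tau}.
  by move=> x y xS yS; rewrite /tau /lwinch_perm; apply: foldl_inj.
have gE : forall y, y \in Sprime k m l ->
    (\sum_(i < k) f (val (tnth y i)) = Ph (tau y) - Ph y + k%:R * c0)%R.
  move=> y yS; rewrite /Ph /tau (phi_tel nu hl0 Pl yS) /hh sumrB sumr_const card_ord.
  rewrite mulr_natl subrK; apply: eq_bigr => i _; by rewrite xv_tnth.
have orb : forall n x, x \in Sprime k m l ->
    (\sum_(y <- traject tau x n) (\sum_(i < k) f (val (tnth y i)))
      = n%:R * (k%:R * c0) + (Ph (iter n tau x) - Ph x))%R.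
  elim => [|n IH] x xS; first by rewrite big_nil subrr mul0r addr0.
  rewrite /= big_cons IH ?tauS // gE // -iterSr /=.
  rewrite -natr1; ring.
exists (k%:R * c0)%R => x xS.
rewrite orb // (iter_order_in tauS tauinj xS) subrr addr0 /fingraph.orbit size_traject.
have hn : ((fingraph.order tau x)%:R != 0 :> R)%R by rewrite pnatr_eq0 -lt0n fingraph.order_gt0.
by rewrite mulrAC mulfV ?mul1r.
Qed.
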